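(* Let $\lambda=(\lambda_1,\ldots,\lambda_\ell)$ be a partition with $\ell$ positive parts, let $t$ be an integer with $0\leq t<\lambda_\ell$, and let $\mu=(\lambda_1-t,\ldots,\lambda_\ell-t)$ (the partition whose Young diagram is obtained by deleting the first $t$ columns of that of $\lambda$). Suppose $n\geq\ell$. Then the poset $\mathcal B_\mu^n$ is isomorphic to a principal order ideal in the poset $\mathcal B_\lambda^n$. In particular, if $\mathcal B_\mu^n$ is not a lattice, then $\mathcal B_\lambda^n$ is not a lattice.
   Context: For $N\geq 1$ and a partition $\nu$ with at most $N$ positive parts, $\mathcal B_\nu^N$ is the set of semistandard Young tableaux of shape $\nu$ (rows weakly increasing, columns strictly increasing) with entries in $\{1,\ldots,N+1\}$, partially ordered by the reflexive transitive closure of $T<F_i(T)$ for $i\in\{1,\ldots,N\}$ with $F_i(T)\neq 0$. Here $F_i$ is the type A crystal lowering operator: in the reading word of $T$ (rows read from bottom to top, each row left to right) keep only letters $i$ and $i+1$, replace each $i$ by '')'' and each $i+1$ by ''('', and match parentheses in the usual way; if there is no unmatched '')'', $F_i(T)=0$; otherwise $F_i(T)$ is obtained by changing the entry $i$ corresponding to the rightmost unmatched '')'' into $i+1$. *)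

(* Defs.v *)
From mathcomp Require Import all_boot.
From Stdlib Require Import Relations.
Set Implicit Arguments. Unset Strict Implicit. Unset Printing Implicit Defensive.

Definition is_partition (nu : seq nat) : bool :=
  sorted geq nu && all (fun x => 0 < x) nu.

(* A tableau is a list of rows (row 1 first, i.e. top row first). *)
Definition tableau := seq (seq nat).

Definition is_SSYT (N : nat) (nu : seq nat) (T : tableau) : bool :=
  [&& map size T == nu,
      all (fun r => sorted leq r) T,
      all (fun r => all (fun x => (1 <= x <= N.+1)) r) T &
      [forall i : 'I_(size T).-1,
         [forall j : 'I_(size (nth [::] T i.+1)),
            nth 0 (nth [::] T i) j < nth 0 (nth [::] T i.+1) j]]].

Definition reading_word (T : tableau) : seq nat := flatten (rev T).

(* Scanning the word left to right, letters i are ")" and letters i+1 are "(".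
   [opn] counts currently unmatched "("; [best] is the position of the
   rightmost unmatched ")" seen so far. *)
Fixpoint rightmost_unmatched (i : nat) (w : seq nat) (k opn : nat)
    (best : option nat) : option nat :=
  match w with
  | [::] => best
  | x :: w' =>
      if x == i.+1 then rightmost_unmatched i w' k.+1 opn.+1 best
      else if x == i then
        (if opn is opn'.+1 then rightmost_unmatched i w' k.+1 opn' best
         else rightmost_unmatched i w' k.+1 0 (Some k))
      else rightmost_unmatched i w' k.+1 opn best
  end.

(* Crystal lowering operator on words; None stands for 0. *)
Definition F_word (i : nat) (w : seq nat) : option (seq nat) :=
  match rightmost_unmatched i w 0 0 None with
  | None => None
  | Some k => Some (set_nth 0 w k i.+1)
  end.

Definition F_tab (i : nat) (T : tableau) : option tableau :=
  omap (fun w => rev (reshape (shape (rev T)) w)) (F_word i (reading_word T)).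

Definition crystal_step (N : nat) (T S : tableau) : Prop :=
  exists2 i, 1 <= i <= N & F_tab i T = Some S.

Definition crystal_le (N : nat) : relation tableau :=
  clos_refl_trans tableau (crystal_step N).

(* The poset B_nu^N has carrier [is_SSYT N nu] and order [crystal_le N]. *)

Definition is_lattice (P : tableau -> Prop) (le : relation tableau) : Prop :=
  forall x y, P x -> P y ->
    (exists j, [/\ P j, le x j, le y j &
                forall z, P z -> le x z -> le y z -> le j z]) /\
    (exists m, [/\ P m, le m x, le m y &
                forall z, P z -> le z x -> le z y -> le z m]).

(* Main.v *)
Require Import Defs.
From mathcomp Require Import all_boot zify.
From Stdlib Require Import Relations.
Set Implicit Arguments. Unset Strict Implicit. Unset Printing Implicit Defensive.


Definition opst (i o x : nat) := if x == i.+1 then o.+1 else if x == i then o.-1 else o.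
Definition op (i o : nat) (s : seq nat) := foldl (opst i) o s.
Definition unm (i o : nat) (w : seq nat) :=
  exists u v, w = u ++ i :: v /\ op i o u = 0.

Lemma op_cat i o s1 s2 : op i o (s1 ++ s2) = op i (op i o s1) s2.
Proof. by rewrite /op foldl_cat. Qed.
Lemma op_cons i o x s : op i o (x :: s) = op i (opst i o x) s.
Proof. by []. Qed.

Lemma catlK (T : Type) (p a b : seq T) : p ++ a = p ++ b -> a = b.
Proof. by elim: p => //= x p IH [] /IH. Qed.

Lemma RU_spec i w k o b :
  (rightmost_unmatched i w k o b = b /\ ~ unm i o w) \/
  (exists u v, [/\ w = u ++ i :: v, op i o u = 0, ~ unm i 0 v &
     rightmost_unmatched i w k o b = Some (k + size u)]).
Proof.
elim: w k o b => [|x w IH] k o b /=.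
  left; split => // -[[|? ?] [v []]] //.
case: eqP => [Ex|Nx1].
  case: (IH k.+1 o.+1 b) => [[-> Hn]|[u [v [E1 E2 E3 E4]]]].
    left; split=> // -[[|y u] [v [Ew Hop]]].
      by case: Ew => Exi; move: Ex; rewrite Exi; lia.
    case: Ew => Ey Ew; subst y; apply: Hn; exists u, v; split=> //.
    by move: Hop; rewrite op_cons /opst Ex eqxx.
  right; exists (x :: u), v; split=> //; first by rewrite /= E1.
    by rewrite op_cons /opst Ex eqxx.
  by rewrite E4 addSnnS.
case: eqP => [Exi|Nxi].
  case: o => [|o].
    case: (IH k.+1 0 (Some k)) => [[-> Hn]|[u [v [E1 E2 E3 E4]]]].
      by right; exists [::], w; split; rewrite ?addn0 /= ?Exi.
    right; exists (x :: u), v; split=> //; first by rewrite /= E1.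
      by rewrite op_cons /opst Exi eqxx; case: eqP => //; lia.
    by rewrite E4 addSnnS.
  case: (IH k.+1 o b) => [[-> Hn]|[u [v [E1 E2 E3 E4]]]].
    left; split=> // -[[|y u] [v [Ew Hop]]] //.
    case: Ew => Ey Ew; subst y; apply: Hn; exists u, v; split=> //.
    by move: Hop; rewrite op_cons /opst Exi eqxx; case: eqP => //; lia.
  right; exists (x :: u), v; split=> //; first by rewrite /= E1.
    by rewrite op_cons /opst Exi eqxx; case: eqP => //; lia.
  by rewrite E4 addSnnS.
case: (IH k.+1 o b) => [[-> Hn]|[u [v [E1 E2 E3 E4]]]].
  left; split=> // -[[|y u] [v [Ew Hop]]].
    by case: Ew => Ex' _; apply: Nxi.
  case: Ew => Ey Ew; subst y; apply: Hn; exists u, v; split=> //.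
  by move: Hop; rewrite op_cons /opst; do 2 case: eqP => //.
right; exists (x :: u), v; split=> //; first by rewrite /= E1.
  by rewrite op_cons /opst; do 2 case: eqP => //.
by rewrite E4 addSnnS.
Qed.

Lemma set_nth_mid (u v : seq nat) a b : set_nth 0 (u ++ a :: v) (size u) b = u ++ b :: v.
Proof. by elim: u => //= x u ->. Qed.

Lemma Fword_some i w w' : F_word i w = Some w' ->
  exists u v, [/\ w = u ++ i :: v, op i 0 u = 0, ~ unm i 0 v & w' = u ++ i.+1 :: v].
Proof.
rewrite /F_word; case: (RU_spec i w 0 0 None) => [[-> _]//|[u [v [E1 E2 E3 ->]]]].
by case=> <-; exists u, v; split=> //; rewrite E1 add0n set_nth_mid.
Qed.

Lemma Fword_none i w : F_word i w = None -> ~ unm i 0 w.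
Proof.
rewrite /F_word; case: (RU_spec i w 0 0 None) => [[_ ?]//|[u [v [E1 E2 E3 ->]]]] //.
Qed.

Lemma split_lt (T : Type) (u v u' v' : seq T) (a b : T) :
  u ++ a :: v = u' ++ b :: v' -> size u < size u' ->
  exists m, u' = u ++ a :: m /\ v = m ++ b :: v'.
Proof.
elim: u u' => [|x u IH] [|y u'] //= [Exy E] Hs.
  by exists u'; rewrite Exy.
have [m [-> ->]] := IH _ E Hs; by exists m; rewrite Exy.
Qed.

Lemma opst0i i : opst i 0 i = 0.
Proof. by rewrite /opst (ltn_eqF (ltnSn i)) eqxx. Qed.

Lemma unm_unique i u v u' v' :
  u ++ i :: v = u' ++ i :: v' -> op i 0 u = 0 -> op i 0 u' = 0 ->
  ~ unm i 0 v -> ~ unm i 0 v' -> u = u' /\ v = v'.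
Proof.
move=> E H1 H2 N1 N2.
case: (ltngtP (size u) (size u')) => Hs.
- have [m [E1 E2]] := split_lt E Hs; exfalso; apply: N1; exists m, v'; split=> //.
  by move: H2; rewrite E1 op_cat H1 op_cons opst0i.
- have [m [E1 E2]] := split_lt (esym E) Hs; exfalso; apply: N2; exists m, v; split=> //.
  by move: H1; rewrite E1 op_cat H2 op_cons opst0i.
- have Eu : u = u'.
    by have := congr1 (take (size u)) E; rewrite take_size_cat // Hs take_size_cat.
  by subst u'; split=> //; move/catlK: E => [].
Qed.

Definition wd (L : tableau) := flatten (rev L).

Lemma wd_cat A R B : wd (A ++ R :: B) = wd B ++ R ++ wd A.
Proof. by rewrite /wd rev_cat rev_cons flatten_cat -cats1 flatten_cat /= cats0 catA. Qed.

Lemma cat_split (T : Type) (p q u v : seq T) a : p ++ q = u ++ a :: v ->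
  (exists x y, [/\ p = x ++ a :: y, u = x & v = y ++ q]) \/
  (exists u', u = p ++ u' /\ q = u' ++ a :: v).
Proof.
elim: p u => [|z p IH] u /=; first by move=> ->; right; exists u.
case: u => [|y u] /= [Ez E].
  by left; exists [::], p; rewrite Ez E.
case: (IH _ E) => [[x [y' [-> -> ->]]]|[u' [-> ->]]].
  by left; exists (y :: x), y'; rewrite Ez.
by right; exists u'; rewrite Ez.
Qed.

Lemma split_flatten (s : seq (seq nat)) u a v : flatten s = u ++ a :: v ->
  exists B x y C, [/\ s = B ++ (x ++ a :: y) :: C, u = flatten B ++ x & v = y ++ flatten C].
Proof.
elim: s u => [|R s IH] u /=; first by case: u.
move=> E; case: (cat_split E) => [[x [y [-> -> ->]]]|[u' [-> /IH [B [x [y [C [-> -> ->]]]]]]]].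
  by exists [::], x, y, s.
by exists (R :: B), x, y, C; rewrite /= catA.
Qed.

Lemma shape_mid (B C : seq (seq nat)) R R' : size R = size R' ->
  shape (B ++ R :: C) = shape (B ++ R' :: C).
Proof. by move=> E; rewrite /shape !map_cat /= E. Qed.

Lemma Ftab_some i T S : F_tab i T = Some S ->
  exists Top x y Bot, [/\ T = Top ++ (x ++ i :: y) :: Bot,
    S = Top ++ (x ++ i.+1 :: y) :: Bot, op i 0 (wd Bot ++ x) = 0 &
    ~ unm i 0 (y ++ wd Top)].
Proof.
rewrite /F_tab.
case E: (F_word i (reading_word T)) => [w'|] //= [<-].
have [u [v [Ew Hop Hn ->]]] := Fword_some E.
have [B [x [y [C [ET Eu Ev]]]]] := split_flatten Ew; subst u v.
exists (rev C), x, y, (rev B); split.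
- by rewrite -[T]revK ET rev_cat rev_cons -cats1 -catA.
- have Esh : shape (rev T) = shape (B ++ (x ++ i.+1 :: y) :: C).
    by rewrite ET; apply: shape_mid; rewrite !size_cat.
  have -> : (flatten B ++ x) ++ i.+1 :: y ++ flatten C = flatten (B ++ (x ++ i.+1 :: y) :: C).
    by rewrite flatten_cat /= -!catA.
  by rewrite Esh flattenK rev_cat rev_cons -cats1 -catA.
- by rewrite /wd revK; exact: Hop.
- by rewrite /wd revK; exact: Hn.
Qed.

Lemma Ftab_conv i Top x y Bot :
  op i 0 (wd Bot ++ x) = 0 -> ~ unm i 0 (y ++ wd Top) ->
  F_tab i (Top ++ (x ++ i :: y) :: Bot) = Some (Top ++ (x ++ i.+1 :: y) :: Bot).
Proof.
move=> H1 H2; rewrite /F_tab.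
have Ew : reading_word (Top ++ (x ++ i :: y) :: Bot) = (wd Bot ++ x) ++ i :: (y ++ wd Top).
  by rewrite /reading_word -/(wd _) wd_cat -!catA.
rewrite Ew /F_word.
case: (RU_spec i ((wd Bot ++ x) ++ i :: (y ++ wd Top)) 0 0 None) =>
   [[_ Hn]|[u [v [E1 E2 E3 ->]]]].
  by exfalso; apply: Hn; exists (wd Bot ++ x), (y ++ wd Top).
have [Eu Ev] := unm_unique E1 H1 E2 H2 E3; subst u v.
rewrite /= add0n set_nth_mid; congr Some.
have Esh : shape (rev (Top ++ (x ++ i :: y) :: Bot)) =
           shape (rev Bot ++ (x ++ i.+1 :: y) :: rev Top).
  by rewrite rev_cat rev_cons -cats1 -catA; apply: shape_mid; rewrite !size_cat.
have -> : (wd Bot ++ x) ++ i.+1 :: y ++ wd Top = flatten (rev Bot ++ (x ++ i.+1 :: y) :: rev Top).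
  by rewrite flatten_cat /= /wd -!catA.
by rewrite Esh flattenK rev_cat rev_cons revK -cats1 -catA revK.
Qed.


Ltac opc x i := rewrite /opst; case: (eqVneq x i.+1) => [opE|_];
  [subst x; rewrite ?eqxx ?(gtn_eqF (ltnSn i)) /= |
   case: (eqVneq x i) => [opE|_];
   [subst x; rewrite ?eqxx ?(ltn_eqF (ltnSn i)) /= | rewrite /=]].

Lemma op_mono i o1 o2 s : o1 <= o2 -> op i o1 s <= op i o2 s.
Proof.
elim: s o1 o2 => //= x s IH o1 o2 H; apply: IH; opc x i; lia.
Qed.

Lemma op_lb i o s : o + count_mem i.+1 s <= op i o s + count_mem i s.
Proof.
elim: s o => //= x s IH o; have := IH (opst i o x); opc x i; lia.
Qed.

Lemma op_noi i o s : count_mem i s = 0 -> op i o s = o + count_mem i.+1 s.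
Proof.
elim: s o => //= [o _|x s IH o]; first by rewrite addn0.
opc x i => // H; rewrite IH //; lia.
Qed.

Definition irr i x := (x != i) && (x != i.+1).

Lemma op_irr i o s : all (irr i) s -> op i o s = o.
Proof.
elim: s o => //= x s IH o /andP[/andP[H1 H2] H]; rewrite /opst.
by rewrite (negbTE H2) (negbTE H1) IH.
Qed.

Lemma op_nseq_i i o t : op i o (nseq t i) = o - t.
Proof.
elim: t o => [|t IH] o /=; first by rewrite subn0.
rewrite IH /opst (ltn_eqF (ltnSn i)) eqxx; lia.
Qed.

Lemma op_nseq_i1 i o t : op i o (nseq t i.+1) = o + t.
Proof.
elim: t o => [|t IH] o /=; first by rewrite addn0.
rewrite IH /opst eqxx; lia.
Qed.

Definition proj i s := filter (fun x => (x == i) || (x == i.+1)) s.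

Lemma op_proj i o s : op i o s = op i o (proj i s).
Proof.
elim: s o => //= x s IH o; case: ifP => [_|/negbT]; first by rewrite /= IH.
rewrite negb_or => /andP[H1 H2]; by rewrite /opst (negbTE H1) (negbTE H2) IH.
Qed.

Lemma unm_proj i o s : unm i o s <-> unm i o (proj i s).
Proof.
split.
  move=> [u [v [-> H]]]; exists (proj i u), (proj i v); split.
    by rewrite /proj filter_cat /= eqxx.
  by rewrite -op_proj.
move=> [u' [v' [E H]]].
suff [u [v [Es Eu]]] : exists u v, s = u ++ i :: v /\ proj i u = u'.
  by exists u, v; split=> //; rewrite op_proj Eu.
elim: s u' E {H} => [|x s IH] u' /=; first by case: u'.
case: ifP => Hx.
  case: u' => [|y u'] /= [Ey E].
    by exists [::], s; rewrite Ey.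
  have [u [v [-> <-]]] := IH _ E; exists (x :: u), v; split=> //=.
  by rewrite Hx Ey.
move=> E; have [u [v [-> <-]]] := IH _ E; exists (x :: u), v; split=> //=.
by rewrite Hx.
Qed.

Lemma nounm_proj i s1 s2 : proj i s1 = proj i s2 -> ~ unm i 0 s1 -> ~ unm i 0 s2.
Proof.
move=> E H H2; apply: H; apply (proj2 (unm_proj _ _ _)); rewrite E; exact: (proj1 (unm_proj _ _ _)).
Qed.

Lemma proj_irr i s : all (irr i) s -> proj i s = [::].
Proof.
elim: s => //= x s IH /andP[/andP[H1 H2] H]; by rewrite (negbTE H1) (negbTE H2) IH.
Qed.

Lemma nounm_lattice i w : ~ unm i 0 w -> forall p q, w = p ++ q ->
  count_mem i p <= count_mem i.+1 p.
Proof.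
move=> Hn p q E.
suff : count_mem i p <= count_mem i.+1 p /\ op i 0 p = count_mem i.+1 p - count_mem i p by case.
elim/last_ind: p q E => [|p x IH] q E /=; first by [].
have [H1 H2] : count_mem i p <= count_mem i.+1 p /\ op i 0 p = count_mem i.+1 p - count_mem i p.
  by apply: (IH (x :: q)); rewrite E cat_rcons.
have Hpos : x = i -> 0 < op i 0 p.
  move=> Hx; case: (posnP (op i 0 p)) => // H0; exfalso; apply: Hn; exists p, q.
  by rewrite E -cats1 -catA /= Hx.
have Ec : forall j, count_mem j (rcons p x) = count_mem j p + (x == j).
  by move=> j; rewrite -cats1 count_cat /= addn0.
rewrite !Ec -cats1 op_cat; move: H1 H2 Hpos.
generalize (count_mem i p) (count_mem i.+1 p) (op i 0 p) => a b c H1 H2 Hpos /=.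
opc x i; [ | have := Hpos erefl | ]; move=> *; split; lia.
Qed.

Definition colrel (A B : seq nat) := all (fun c => nth 0 A c < nth 0 B c) (iota 0 (size B)).
Definition ssyt N nu (T : tableau) := [/\ map size T = nu, all (sorted leq) T,
  all (all (fun x => 1 <= x <= N.+1)) T & sorted colrel T].

Lemma colrelP A B : reflect (forall c, c < size B -> nth 0 A c < nth 0 B c) (colrel A B).
Proof.
apply: (iffP allP) => H c.
  by move=> Hc; apply: H; rewrite mem_iota.
by rewrite mem_iota => /andP[_ Hc]; apply: H.
Qed.

Lemma ssytP N nu T : is_SSYT N nu T <-> ssyt N nu T.
Proof.
have E : [forall i : 'I_(size T).-1, [forall j : 'I_(size (nth [::] T i.+1)),
    nth 0 (nth [::] T i) j < nth 0 (nth [::] T i.+1) j]] = sorted colrel T.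
  apply/forallP/(sortedP [::]) => H.
    move=> i Hi; have Hi' : i < (size T).-1 by lia.
    apply/colrelP => c Hc; exact: (forallP (H (Ordinal Hi')) (Ordinal Hc)).
  move=> [i Hi]; apply/forallP => -[j Hj] /=.
  by apply: (colrelP _ _ (H i _)) => //; lia.
rewrite /is_SSYT E; split.
  by case/and4P => /eqP.
by case=> -> -> -> ->; rewrite eqxx.
Qed.


Ltac fixsize := try change (Equality.sort Datatypes_nat__canonical__eqtype_Equality) with nat in *.
Ltac nlia := fixsize; lia.

Lemma sorted_replace (T : Type) (e : rel T) A R R' B :
  sorted e (A ++ R :: B) -> (forall U, e U R -> e U R') ->
  (if B is D :: _ then e R' D else true) -> sorted e (A ++ R' :: B).
Proof.
rewrite !sorted_cat_cons => /andP[H1 H2] HU HD; apply/andP; split.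
  case: A H1 => //= a A; rewrite !rcons_path => /andP[-> /HU] //.
by case: B H2 HD => //= D B /andP[_ ->] ->.
Qed.

Lemma sorted_mid_next (T : Type) (e : rel T) A R D B :
  sorted e (A ++ R :: D :: B) -> e R D.
Proof. by rewrite sorted_cat_cons => /andP[_ /= /andP[]]. Qed.

Lemma sorted_mid_prev (T : Type) (e : rel T) A U R B :
  sorted e (A ++ U :: R :: B) -> e U R.
Proof. exact: sorted_mid_next. Qed.

Definition tle (T S : tableau) := map size T = map size S /\
  forall r c, nth 0 (nth [::] T r) c <= nth 0 (nth [::] S r) c.

Lemma tle_refl T : tle T T.
Proof. by split. Qed.

Lemma tle_trans T1 T2 T3 : tle T1 T2 -> tle T2 T3 -> tle T1 T3.
Proof.
move=> [E1 H1] [E2 H2]; split; first by rewrite E1.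
by move=> r c; apply: leq_trans (H1 r c) (H2 r c).
Qed.

Lemma tle_mid A R R' B : size R = size R' -> (forall c, nth 0 R c <= nth 0 R' c) ->
  tle (A ++ R :: B) (A ++ R' :: B).
Proof.
move=> Es Hc; split; first by rewrite !map_cat /= Es.
move=> r c; rewrite !nth_cat; case: ltnP => // _.
by case: (r - size A) => //= n.
Qed.

Lemma row_le (x y : seq nat) i c : nth 0 (x ++ i :: y) c <= nth 0 (x ++ i.+1 :: y) c.
Proof. rewrite !nth_cat; case: ltnP => // _; case: (c - size x) => //=. Qed.

Lemma Ftab_tle i T S : F_tab i T = Some S -> tle T S.
Proof.
case/Ftab_some => Top [x [y [Bot [-> -> _ _]]]].
by apply: tle_mid; [rewrite !size_cat | exact: row_le].
Qed.

Lemma crystal_tle N T S : crystal_le N T S -> tle T S.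
Proof.
elim => [T1 S1 [i _ /Ftab_tle]|T1|T1 T2 T3 _ H1 _ H2] //.
exact: tle_trans H1 H2.
Qed.

Lemma sorted_split (s : seq nat) j : sorted leq s ->
  exists s1 s2, [/\ s = s1 ++ s2, all (fun x => x < j) s1 & all (fun x => j <= x) s2].
Proof.
elim: s => [|a s IH] /=; first by exists [::], [::].
move=> Hp; have Hs : sorted leq s by case: s Hp {IH} => //= b s /andP[].
have Ha : all (leq a) s by exact: (order_path_min leq_trans Hp).
case: (ltnP a j) => Haj.
  have [s1 [s2 [-> H1 H2]]] := IH Hs; exists (a :: s1), s2; split=> //=.
  by rewrite Haj.
exists [::], (a :: s); split=> //=; rewrite Haj /=.
by apply/allP => z /(allP Ha) Hz; apply: leq_trans Hz.
Qed.

Lemma count_ge_nth (s : seq nat) (p : pred nat) m : m <= size s ->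
  (forall j, j < m -> p (nth 0 s j)) -> m <= count p s.
Proof.
elim: s m => [|a s IH] [|m] //= Hm H.
have := IH m Hm (fun j Hj => H j.+1 Hj); have := H 0 erefl => /= ->; lia.
Qed.

Lemma sorted_nth_le (s : seq nat) c1 c2 : sorted leq s -> c1 <= c2 -> c2 < size s ->
  nth 0 s c1 <= nth 0 s c2.
Proof.
move=> Hs H12 H2; apply: (sorted_leq_nth leq_trans leqnn 0 Hs) => //.
by rewrite inE; apply: leq_ltn_trans H2.
Qed.

Lemma below_not i x y D : sorted leq (x ++ i :: y) -> sorted leq D ->
  colrel (x ++ i :: y) D -> size x < size D -> nth 0 D (size x) = i.+1 ->
  0 < op i 0 (D ++ x).
Proof.
move=> HR HD /colrelP HC Hsx HDx.
set R := x ++ i :: y in HR HC.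
have HxR : forall c, c < size x -> nth 0 R c <= i.
  move=> c Hc; have -> : i = nth 0 R (size x) by rewrite /R nth_cat ltnn subnn.
  apply: sorted_nth_le => //; first exact: ltnW.
  by rewrite /R size_cat /=; nlia.
have Hxs : sorted leq x by have [] := cat_sorted2 HR.
have [x1 [x2 [Ex H1 H2]]] := sorted_split i Hxs.
have Hx2 : forall c, size x1 <= c <= size x -> nth 0 R c = i.
  move=> c /andP[Hc1 Hc2]; case: (ltnP c (size x)) => Hc.
    apply/eqP; rewrite eqn_leq HxR //=.
    have : nth 0 R c = nth 0 x2 (c - size x1).
      by rewrite /R nth_cat Hc Ex nth_cat ltnNge Hc1.
    move=> ->; apply: (allP H2); apply: mem_nth; move: Hc; rewrite Ex size_cat; nlia.
  have Ec : c = size x by nlia.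
  by rewrite Ec /R nth_cat ltnn subnn.
have HD1 : forall c, size x1 <= c <= size x -> nth 0 D c = i.+1.
  move=> c Hc; apply/eqP; rewrite eqn_leq -{1}HDx.
  rewrite sorted_nth_le //; last by case/andP: Hc.
  have := HC c (leq_ltn_trans (proj2 (andP Hc)) Hsx); rewrite Hx2 //.
have Ecx : count_mem i x = size x2.
  rewrite Ex count_cat.
  have -> : count_mem i x1 = 0.
    apply/count_memPn/negP => /(allP H1); rewrite ltnn.
    by [].
  rewrite add0n; apply/eqP; rewrite -all_count; apply/allP => z Hz /=.
  rewrite eqn_leq (allP H2 z Hz) andbT.
  have : z \in x by rewrite Ex mem_cat Hz orbT.
  case/(nthP 0) => c Hc <-; by have := HxR c Hc; rewrite /R nth_cat Hc.
set k := size x1.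
have Hk : k + size x2 = size x by rewrite Ex size_cat.
have Hcnt1 : (size x2).+1 <= count_mem i.+1 (drop k D).
  apply: count_ge_nth; first by rewrite size_drop; nlia.
  move=> j Hj; rewrite nth_drop /= HD1 //; nlia.
have Hcnt0 : count_mem i (drop k D) = 0.
  apply/count_memPn/negP => /(nthP 0) [j Hj].
  rewrite nth_drop => Ej; move: Hj; rewrite size_drop => Hj.
  have : nth 0 D k <= nth 0 D (k + j) by apply: sorted_nth_le => //; nlia.
  rewrite HD1 ?Ej; [nlia| rewrite leqnn /=; nlia].
have Hop1 := op_lb i 0 (drop k D); rewrite Hcnt0 addn0 add0n in Hop1.
rewrite -(cat_take_drop k D) -catA op_cat.
apply: leq_trans (op_mono _ _ (leq0n _)).
rewrite op_cat; have := op_lb i (op i 0 (drop k D)) x; rewrite Ecx; nlia.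
Qed.


Lemma wd_cons D B : wd (D :: B) = wd B ++ D.
Proof. by have := wd_cat [::] D B; rewrite /= cats0. Qed.

Lemma nth_mid_neq (x y : seq nat) a b c : c != size x ->
  nth 0 (x ++ a :: y) c = nth 0 (x ++ b :: y) c.
Proof.
move=> H; rewrite !nth_cat; case: ltnP => // Hc.
by case E: (c - size x) => //; move: H E; nlia.
Qed.

Lemma Ftab_ssyt N nu T S i : ssyt N nu T -> 1 <= i <= N -> F_tab i T = Some S ->
  ssyt N nu S.
Proof.
move=> [Hsz Hrows Hb Hcol] Hi /Ftab_some [Top [x [y [Bot [ET ES Hop Hn]]]]].
subst T S.
have HR : sorted leq (x ++ i :: y).
  by move: Hrows; rewrite all_cat /= => /and3P[_ ->].
have Hy : if y is z :: _ then i < z else true.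
  case: y HR Hn {Hrows Hsz Hb Hcol} => // z y HR Hn.
  move: HR; rewrite sorted_cat_cons => /andP[_ /= /andP[Hiz _]].
  rewrite ltn_neqAle Hiz andbT; apply/eqP => Ez; apply: Hn.
  by exists [::], (y ++ wd Top); rewrite Ez.
have HR' : sorted leq (x ++ i.+1 :: y).
  move: HR; rewrite !sorted_cat_cons => /andP[H1 H2]; apply/andP; split.
    case: x H1 {Hrows Hsz Hb Hcol Hop} => //= a x; rewrite !rcons_path => /andP[-> /=].
    by move=> H; apply: leq_trans H _.
  by case: y H2 Hy {Hn Hrows Hsz Hb Hcol} => //= z y /andP[_ ->] ->.
split.
- by rewrite -Hsz !map_cat /= !size_cat.
- by move: Hrows; rewrite !all_cat /= HR' => /and3P[-> _ ->].
- move: Hb; rewrite !all_cat /= !all_cat /= => /and3P[H1 /and3P[H2 _ H3] H4].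
  rewrite H1 H2 H3 H4 /= ?andbT ltnS; by case/andP: Hi.
- apply: (sorted_replace Hcol).
    move=> U /colrelP HU; apply/colrelP => c; rewrite !size_cat /= => Hc.
    apply: leq_trans (HU c _) (row_le _ _ _ _); by rewrite size_cat.
  clear Hb Hsz; case: Bot Hcol Hop Hrows => // D Bot' Hcol Hop Hrows.
  have HRD := sorted_mid_next Hcol.
  have HD : sorted leq D by move: Hrows; rewrite all_cat /= => /and3P[_ _ /andP[]].
  apply/colrelP => c Hc.
  case: (eqVneq c (size x)) => [Ec|Nc].
    subst c; rewrite nth_cat ltnn subnn /=.
    have := colrelP _ _ HRD (size x) Hc; rewrite nth_cat ltnn subnn /= => Hlt.
    rewrite ltn_neqAle Hlt andbT; apply/eqP => Eq.
    have := below_not HR HD HRD Hc (esym Eq).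
    have := @op_mono i 0 (op i 0 (wd Bot')) (D ++ x) (leq0n _).
    by move: Hop; rewrite wd_cons -catA op_cat => ->; nlia.
  by rewrite -(nth_mid_neq _ i _ Nc); apply: (colrelP _ _ HRD).
Qed.


Fixpoint fpre (t a : nat) (T : tableau) : tableau :=
  match T with [::] => [::] | R :: T' => (nseq t a ++ R) :: fpre t a.+1 T' end.

Fixpoint rowsLB (a : nat) (T : tableau) : Prop :=
  match T with [::] => True | R :: T' => all (leq a) R /\ rowsLB a.+1 T' end.

Lemma size_fpre t a T : size (fpre t a T) = size T.
Proof. by elim: T a => //= R T IH a; rewrite IH. Qed.

Lemma fpre_cat t a A R B : fpre t a (A ++ R :: B) =
  fpre t a A ++ (nseq t (a + size A) ++ R) :: fpre t (a + size A).+1 B.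
Proof.
elim: A a => [|R0 A IH] a /=; first by rewrite addn0.
by rewrite IH addSnnS.
Qed.

Lemma fpre_split t a T A' R' B' : fpre t a T = A' ++ R' :: B' ->
  exists A R B, [/\ T = A ++ R :: B, A' = fpre t a A,
    R' = nseq t (a + size A) ++ R & B' = fpre t (a + size A).+1 B].
Proof.
elim: T a A' => [|R0 T IH] a [|X A'] //= [E1 E2].
  by exists [::], R0, T; rewrite addn0.
have [A [R [B [-> -> -> ->]]]] := IH _ _ E2.
by exists (R0 :: A), R, B; rewrite /= E1 addSnnS.
Qed.

Lemma fpre_inj t a T1 T2 : fpre t a T1 = fpre t a T2 -> T1 = T2.
Proof.
elim: T1 a T2 => [|R1 T1 IH] a [|R2 T2] //= [/catlK -> /IH ->] //.
Qed.

Lemma rowsLB_cat a A R B : rowsLB a (A ++ R :: B) ->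
  all (leq (a + size A)) R /\ rowsLB (a + size A).+1 B.
Proof.
elim: A a => [|R0 A IH] a /=; first by rewrite addn0.
by move=> [_ /IH]; rewrite addSnnS.
Qed.

Lemma all_wd (p : pred nat) L : all p (wd L) = all (all p) L.
Proof. by elim: L => //= R L IH; rewrite wd_cons all_cat IH andbC. Qed.

Lemma all_leq_mono a b (s : seq nat) : a <= b -> all (leq b) s -> all (leq a) s.
Proof. by move=> H /allP Hs; apply/allP => z /Hs; apply: leq_trans. Qed.

Lemma rowsLB_all a L : rowsLB a L -> all (all (leq a)) L.
Proof.
elim: L a => //= R L IH a [-> /IH H] /=.
by apply/allP => R' /(allP H); apply: all_leq_mono.
Qed.

Lemma fpre_all t a L : rowsLB a L -> all (all (leq a)) (fpre t a L).
Proof.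
elim: L a => //= R L IH a [HR /IH H] /=.
rewrite all_cat HR andbT; apply/andP; split.
  by apply/allP => z /nseqP [->].
by apply/allP => R' /(allP H); apply: all_leq_mono.
Qed.

Lemma proj_nseq_irr i t b : b < i -> proj i (nseq t b) = [::].
Proof.
move=> H; apply: proj_irr; apply/allP => z /nseqP [-> _].
by rewrite /irr !neq_ltn H /=; lia.
Qed.

Lemma proj_fpre i t a L : a + size L <= i -> proj i (wd (fpre t a L)) = proj i (wd L).
Proof.
elim: L a => //= R L IH a H.
rewrite !wd_cons /proj !filter_cat -/(proj i _) -/(proj i _) -/(proj i _).
rewrite IH; last by move: H; nlia.
by rewrite proj_nseq_irr //; move: H; nlia.
Qed.

Lemma irr_ge i (s : seq nat) : all (leq i.+2) s -> all (irr i) s.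
Proof.
move/allP => H; apply/allP => z /H Hz; rewrite /irr !neq_ltn; apply/andP; split;
  apply/orP; right; nlia.
Qed.

Lemma op_fpre i t b L : b <= i -> rowsLB b.+1 L ->
  op i 0 (wd (fpre t b.+1 L) ++ nseq t b) = op i 0 (wd L).
Proof.
elim: L b => [|R L IH] b Hb /=.
  move=> _; case: (ltngtP b i) Hb => // [Hbi|->] _.
    by rewrite op_irr //; apply/allP => z /nseqP [-> _]; rewrite /irr !neq_ltn Hbi /=; nlia.
  by rewrite op_nseq_i.
move=> [HR HL]; rewrite !wd_cons -!catA.
case: (ltngtP b i) Hb => // [Hbi|Ebi] _.
  rewrite catA op_cat IH // op_cat [in RHS]op_cat.
  by rewrite op_irr //; apply/allP => z /nseqP [-> _]; rewrite /irr !neq_ltn Hbi /=; nlia.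
subst b.
have H1 : all (irr i) (wd (fpre t i.+2 L)).
  by apply: irr_ge; rewrite all_wd; apply: fpre_all.
have H2 : all (irr i) (wd L).
  by apply: irr_ge; rewrite all_wd; apply: rowsLB_all.
have HR0 : count_mem i R = 0.
  apply/count_memPn/negP => /(allP HR); rewrite ltnn //.
rewrite op_cat (op_irr _ H1) op_cat op_nseq_i1 op_cat (op_noi _ HR0) op_nseq_i.
by rewrite op_cat (op_irr _ H2) (op_noi _ HR0); nlia.
Qed.


Lemma mem_leq_row k (x y : seq nat) i : all (leq k) (x ++ i :: y) -> k <= i.
Proof. by rewrite all_cat /= => /and3P[_ ->]. Qed.

Lemma Fcomm1 t T S i : rowsLB 1 T -> F_tab i T = Some S ->
  F_tab i (fpre t 1 T) = Some (fpre t 1 S).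
Proof.
move=> HLB /Ftab_some [Top [x [y [Bot [ET ES Hop Hn]]]]]; subst T S.
have [HR HB] := rowsLB_cat HLB.
have Hki := mem_leq_row HR.
rewrite !fpre_cat !catA; apply: Ftab_conv.
  by rewrite catA op_cat op_fpre // -op_cat.
apply: (nounm_proj _ Hn).
by rewrite /proj !filter_cat -!/(proj i _) proj_fpre.
Qed.

Lemma cat_split2 (T : Type) (u v p q : seq T) : u ++ v = p ++ q -> size p <= size u ->
  u = p ++ drop (size p) u /\ q = drop (size p) u ++ v.
Proof.
elim: p u => [|a p IH] u; first by rewrite drop0 => ->.
case: u => [|b u] //= [-> E] H.
by have [E1 E2] := IH _ E H; rewrite -E1.
Qed.

Lemma Fcomm2 t T T2 i : rowsLB 1 T -> F_tab i (fpre t 1 T) = Some (fpre t 1 T2) ->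
  F_tab i T = Some T2.
Proof.
move=> HLB /Ftab_some [Top' [x' [y' [Bot' [ET ES Hop Hn]]]]].
have [A [R [B [ET1 ETop EM EBot]]]] := fpre_split ET.
have [A2 [R2 [B2 [ET2 ETop2 EM2 EBot2]]]] := fpre_split ES.
subst T Top' Bot'.
have HsA : size A2 = size A by rewrite -(size_fpre t 1 A2) -ETop2 size_fpre.
rewrite HsA in EM2.
have [HR HB] := rowsLB_cat HLB.
case: (ltnP (size x') t) => Hx.
  have := congr1 (nth 0 ^~ (size x')) EM; have := congr1 (nth 0 ^~ (size x')) EM2.
  rewrite /= !nth_cat ltnn subnn size_nseq Hx !nth_nseq Hx /= => <- /eqP.
  by rewrite eq_sym (gtn_eqF (ltnSn _)).
have Hsz : size (nseq t (1 + size A)) <= size x' by rewrite size_nseq.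
have [Ex' Ey'] := cat_split2 EM Hsz.
rewrite size_nseq in Ex' Ey'.
set x := drop t x' in Ex' Ey'.
rewrite Ey' in HR.
have Hki := mem_leq_row HR.
have HT2 : F_tab i (A ++ (x ++ i :: y') :: B) = Some (A ++ (x ++ i.+1 :: y') :: B).
  apply: Ftab_conv.
    by move: Hop; rewrite Ex' catA op_cat op_fpre // -op_cat.
  apply: (nounm_proj _ Hn).
  by rewrite /proj !filter_cat -!/(proj i _) proj_fpre.
rewrite Ey' HT2; congr Some; apply: (@fpre_inj t 1).
by rewrite ES fpre_cat Ex' -catA.
Qed.


Fixpoint tops (N : nat) (mu : seq nat) : tableau :=
  match mu with
  | [::] => [::]
  | m :: mu' => let L := tops N mu' in
      (map predn (head [::] L) ++ nseq (m - head 0 mu') N.+1) :: L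
  end.

Lemma tops_size N mu : sorted geq mu -> map size (tops N mu) = mu.
Proof.
elim: mu => //= m mu IH Hs.
have Hs' : sorted geq mu by exact: path_sorted Hs.
rewrite IH //; congr (_ :: _).
have Hh : size (head [::] (tops N mu)) = head 0 mu.
  by have := congr1 (head 0) (IH Hs'); case: (tops N mu) => //=.
rewrite size_cat size_map size_nseq Hh.
case: mu Hs {IH Hs' Hh} => [|m' mu] /=; first by rewrite subn0.
by case/andP=> H _; nlia.
Qed.

Definition tbnd N (k : nat) (R : seq nat) := all (fun x => (N.+2 - k <= x) && (x <= N.+1)) R.

Lemma tops_bnd N mu : all (tbnd N (size mu)) (tops N mu).
Proof.
elim: mu => //= m mu IH; apply/andP; split.
  rewrite /tbnd all_cat; apply/andP; split.
    apply/allP => z /mapP [x Hx ->].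
    have : x \in flatten (tops N mu).
      by case: (tops N mu) Hx => //= R L Hx; rewrite mem_cat Hx.
    move=> Hx'.
    have : all (tbnd N (size mu)) (tops N mu) := IH.
    move/allP => H.
    have [R HR HxR] : exists2 R, R \in tops N mu & x \in R.
      by apply/flattenP.
    by have := allP (H R HR) x HxR => /andP[]; nlia.
  by apply/allP => z /nseqP [-> _]; nlia.
apply/allP => R /(allP IH) /allP HR; apply/allP => z /HR /andP[H1 H2].
by nlia.
Qed.

Lemma sorted_cat_nseq (s : seq nat) m v : sorted leq s -> all (fun x => x <= v) s ->
  sorted leq (s ++ nseq m v).
Proof.
have Hn : forall m a, a <= v -> path leq a (nseq m v).
  by elim=> //= k IH a Ha; rewrite Ha IH.
case: s => [_ _|a s] /=; first by case: m => //= m; apply: Hn.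
elim: s a => [|b s IH] a /= Hp Hall; first by apply: Hn; case/andP: Hall.
case/andP: Hp => -> Hp /=; apply: IH => //; by case/andP: Hall.
Qed.

Lemma tops_ssyt N mu : sorted geq mu -> size mu <= N -> ssyt N mu (tops N mu).
Proof.
move=> Hs HN; split; first exact: tops_size.
- elim: mu Hs HN => //= m mu IH Hs HN.
  have Hs' : sorted geq mu by exact: path_sorted Hs.
  rewrite IH //; last by nlia.
  rewrite andbT; apply: sorted_cat_nseq.
    have : all (sorted leq) (tops N mu) by apply: IH => //; nlia.
    case: (tops N mu) => //= B L /andP[HB _].
    by apply: (homo_sorted (f := predn) (e := leq)) => // x y; nlia.
  apply/allP => z /mapP [x Hx ->].
  have := tops_bnd N mu.
  case: (tops N mu) Hx => //= B L Hx /andP[/allP HB _].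
  by have := HB x Hx; nlia.
- apply/allP => R /(allP (tops_bnd N mu)) /allP H; apply/allP => z /H.
  by nlia.
- elim: mu Hs HN => //= m mu IH Hs HN.
  have Hs' : sorted geq mu by exact: path_sorted Hs.
  have IH' := IH Hs' (ltnW HN).
  case E: (tops N mu) IH' => [|B L] //= IH'; rewrite IH' andbT.
  apply/colrelP => c Hc; rewrite nth_cat size_map Hc (nth_map 0) //.
  have := tops_bnd N mu; rewrite E /= => /andP[/allP HB _].
  have := HB (nth 0 B c) (mem_nth 0 Hc); nlia.
Qed.

Lemma count_wd (p : pred nat) L : count p (wd L) = count p (flatten L).
Proof. by rewrite /wd !count_flatten map_rev sumn_rev. Qed.

Lemma tops_count N mu j : size mu <= N.+1 ->
  count_mem j.+1 (flatten (behead (tops N mu))) <= count_mem j (flatten (tops N mu)).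
Proof.
elim: mu => //= m mu IH HN.
have IH' := IH (ltnW HN).
have Hb := tops_bnd N mu.
case E: (tops N mu) IH' Hb => [|B L] //= IH' /andP[/allP HB _].
rewrite !count_cat count_map.
have -> : count (preim predn (pred1 j)) B = count_mem j.+1 B.
  apply: eq_in_count => x Hx /=; have := HB x Hx; rewrite /= => Hx'.
  apply/eqP/eqP; nlia.
move: IH'; rewrite count_cat; nlia.
Qed.

Lemma sorted_count_eq K (R Q : seq nat) : sorted leq R -> sorted leq Q ->
  size R = size Q -> (forall c, nth 0 R c <= nth 0 Q c) ->
  (forall v, v <= K -> count_mem v R <= count_mem v Q) ->
  all (fun x => x <= K.+1) Q -> R = Q.
Proof.
elim: R Q => [|a R IH] [|b Q] //= HR HQ [Es] Hn Hc /andP[HbK HQK].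
have Hab : a <= b by exact: (Hn 0).
have HQb : all (leq b) Q := order_path_min leq_trans HQ.
case: (ltnP a b) => Hlt.
  have HaK : a <= K by nlia.
  have := Hc a HaK; rewrite /= eqxx.
  have -> : count_mem a Q = 0.
    apply/count_memPn/negP => /(allP HQb); nlia.
  by rewrite (gtn_eqF Hlt).
have Eab : a = b by nlia.
subst b; congr (_ :: _); apply: IH => //.
- exact: path_sorted HR.
- exact: path_sorted HQ.
- by move=> c; exact: (Hn c.+1).
- move=> v Hv; have := Hc v Hv; rewrite /=; nlia.
Qed.

Lemma lw_top N mu T : sorted geq mu -> size mu <= N -> ssyt N mu T ->
  (forall i, 1 <= i <= N -> forall p q, wd T = p ++ q -> count_mem i p <= count_mem i.+1 p) ->
  T = tops N mu.
Proof.
elim: mu T => [|m mu IH] T Hs HN [Hsz Hrows Hb Hcol] Hlat.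
  by case: T Hsz Hrows Hb Hcol Hlat.
case: T Hsz Hrows Hb Hcol Hlat => [|R T'] //= [Hm Hsz] /andP[HR Hrows] /andP[HbR Hb] Hcol Hlat.
have Hs' : sorted geq mu := path_sorted Hs.
have ET' : T' = tops N mu.
  apply: IH.
  - exact: Hs'.
  - by move: HN => /= /ltnW.
  - by split=> //; exact: path_sorted Hcol.
  - by move=> i Hi p q E; apply: (Hlat i Hi p (q ++ R)); rewrite wd_cons E catA.
subst T'.
have [HQsz HQs HQb HQc] := tops_ssyt Hs HN.
move: HQsz HQs HQb HQc; rewrite [tops N (m :: mu)]/=.
set Q := map predn (head [::] (tops N mu)) ++ nseq (m - head 0 mu) N.+1.
move=> HQsz HQs HQb HQc; move: HQsz HQs HQb => /= [HszQ _] /andP[HQs _] /andP[HQb _].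
congr (_ :: _).
apply: (@sorted_count_eq N) => //.
- by rewrite HszQ.
- move=> c; set B := head [::] (tops N mu).
  case: (ltnP c (size B)) => Hc.
    have HRB : colrel R B.
      move: Hcol; rewrite /B; case: (tops N mu) Hc => //= B' L Hc /andP[].
      by [].
    have := colrelP _ _ HRB c Hc.
    rewrite /Q nth_cat size_map Hc (nth_map 0) // -/B; nlia.
  case: (ltnP c (size R)) => HcR; last by rewrite nth_default.
  have -> : nth 0 Q c = N.+1.
    rewrite /Q nth_cat size_map ltnNge Hc /= nth_nseq.
    move: HszQ; rewrite /Q size_cat size_map size_nseq -/B => HszQ.
    have -> : c - size B < m - head 0 mu by nlia.
    by [].
  by have := allP HbR _ (mem_nth 0 HcR) => /andP[_].
- move=> v Hv; case: (posnP v) => [->|Hv0].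
    have -> : count_mem 0 R = 0.
      apply/count_memPn/negP => /(allP HbR) /andP[] //.
    by [].
  have [R1 [R2 [ER H1 H2]]] := sorted_split v.+1 HR.
  have Hvv : 0 < v <= N by rewrite Hv0 Hv.
  have Hl := Hlat v Hvv (wd (tops N mu) ++ R1) R2.
  rewrite wd_cons ER catA in Hl; have {}Hl := Hl erefl.
  have C1 : count_mem v R2 = 0.
    by apply/count_memPn/negP => /(allP H2); nlia.
  have C2 : count_mem v.+1 R1 = 0.
    by apply/count_memPn/negP => /(allP H1); nlia.
  have Ht := @tops_count N (m :: mu) v (ltnW (leq_ltn_trans HN (ltnSn N))).
  move: Ht; rewrite [tops N (m :: mu)]/= -/Q /= count_cat.
  move: Hl; rewrite !count_cat !count_wd ER count_cat C1 C2; nlia.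
- by apply/allP => z /(allP HQb) /andP[].
Qed.


Definition sumT (T : tableau) := sumn (map sumn T).

Lemma sumT_step i T S : F_tab i T = Some S -> sumT S = (sumT T).+1.
Proof.
case/Ftab_some => Top [x [y [Bot [-> -> _ _]]]].
rewrite /sumT !map_cat !sumn_cat /= !sumn_cat /=; nlia.
Qed.

Lemma sumT_bound N mu T : ssyt N mu T -> sumT T <= N.+1 * sumn mu.
Proof.
case=> <- _ Hb _; elim: T Hb => //= R T IH /andP[HR /IH H].
rewrite mulnDr; apply: leq_add => //.
elim: R HR {H IH} => //= a R IH /andP[/andP[_ Ha] /IH H]; rewrite mulnS; nlia.
Qed.

Lemma Ftab_none_nounm i T : F_tab i T = None -> ~ unm i 0 (wd T).
Proof.
rewrite /F_tab; case E: (F_word i (reading_word T)) => //= _.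
exact: Fword_none E.
Qed.

Lemma reach_top N mu : sorted geq mu -> size mu <= N ->
  forall T, ssyt N mu T -> crystal_le N T (tops N mu).
Proof.
move=> Hs HN.
suff H : forall k T, ssyt N mu T -> N.+1 * sumn mu - sumT T <= k ->
    crystal_le N T (tops N mu).
  by move=> T HT; exact: (H _ T HT (leqnn _)).
elim=> [|k IH] T HT Hk;
  case Hhas: (has (fun i => F_tab i T != None) (iota 1 N)).
- case/hasP: Hhas => i; rewrite mem_iota => Hi.
  case E: (F_tab i T) => [S|] // _.
  have HS : ssyt N mu S by apply: (Ftab_ssyt HT _ E); nlia.
  have := sumT_bound HS; rewrite (sumT_step E); nlia.
- have -> : T = tops N mu; last exact: rt_refl.
  apply: lw_top => // i Hi; apply: nounm_lattice; apply: Ftab_none_nounm.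
  have Hin : i \in iota 1 N by rewrite mem_iota; nlia.
  by move/hasPn: Hhas => /(_ i Hin); case: (F_tab i T).
- case/hasP: Hhas => i; rewrite mem_iota => Hi.
  case E: (F_tab i T) => [S|] // _.
  have HS : ssyt N mu S by apply: (Ftab_ssyt HT _ E); nlia.
  apply: rt_trans (rt_step _ _ _ _ _) (IH S HS _).
    by exists i => //; nlia.
  have := sumT_bound HS; rewrite (sumT_step E); nlia.
- have -> : T = tops N mu; last exact: rt_refl.
  apply: lw_top => // i Hi; apply: nounm_lattice; apply: Ftab_none_nounm.
  have Hin : i \in iota 1 N by rewrite mem_iota; nlia.
  by move/hasPn: Hhas => /(_ i Hin); case: (F_tab i T).
Qed.


Lemma rowsLB_of a T : sorted colrel T -> sorted geq (map size T) ->
  all (leq a) (head [::] T) -> rowsLB a T.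
Proof.
elim: T a => //= R T IH a Hc Hs HR; split=> //.
apply: IH.
- exact: path_sorted Hc.
- exact: path_sorted Hs.
case: T Hc Hs => //= D T /andP[/colrelP HRD _] /andP[HDR _].
apply/(all_nthP 0) => c Hc.
have := HRD c Hc; have := allP HR (nth 0 R c) (mem_nth 0 (leq_trans Hc HDR)).
by rewrite /=; nlia.
Qed.

Lemma ssyt_rowsLB N nu T : sorted geq nu -> ssyt N nu T -> rowsLB 1 T.
Proof.
move=> Hs [Hsz _ Hb Hc]; apply: rowsLB_of => //; first by rewrite Hsz.
case: T Hb {Hsz Hc} => //= R T /andP[HR _].
by apply/allP => z /(allP HR) /andP[].
Qed.

Lemma sorted_nseq_cat (s : seq nat) m v : sorted leq s -> all (leq v) s ->
  sorted leq (nseq m v ++ s).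
Proof.
move=> Hs Hv; elim: m => //= m IH.
case: m IH => [|m] IH /=.
  by case: s Hs Hv {IH} => //= a s -> /andP[-> _].
by rewrite leqnn /=; apply: IH.
Qed.

Lemma fpre_size t a (T : tableau) : map size (fpre t a T) = map (fun R => t + size R) T.
Proof. by elim: T a => //= R T IH a; rewrite size_cat size_nseq IH. Qed.

Lemma fpre_sorted t a T : rowsLB a T -> all (sorted leq) T -> all (sorted leq) (fpre t a T).
Proof.
elim: T a => //= R T IH a [HR HL] /andP[Hs HT].
by rewrite IH // andbT; apply: sorted_nseq_cat.
Qed.

Lemma fpre_bnd N t a T : 1 <= a -> a + size T <= N.+2 ->
  all (all (fun x => 1 <= x <= N.+1)) T -> all (all (fun x => 1 <= x <= N.+1)) (fpre t a T).
Proof.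
elim: T a => //= R T IH a Ha HaT /andP[HR HT].
have H1 : all (all (fun x => 1 <= x <= N.+1)) (fpre t a.+1 T) by apply: IH => //; nlia.
rewrite H1 andbT all_cat HR andbT; apply/allP => z /nseqP [-> _]; nlia.
Qed.

Lemma fpre_colrel t a T : sorted colrel T -> sorted colrel (fpre t a T).
Proof.
elim: T a => //= R T IH a Hp.
have {}IH := IH a.+1 (path_sorted Hp).
case: T Hp IH => //= D T /andP[HRD _] ->; rewrite andbT.
apply/colrelP => c; rewrite size_cat size_nseq => Hc.
rewrite !nth_cat !size_nseq; case: (ltnP c t) => Hct.
  by rewrite !nth_nseq Hct.
by apply: (colrelP _ _ HRD); nlia.
Qed.

Lemma fpre_ssyt N t lam T : sorted geq lam -> all (fun x => t < x) lam -> size lam <= N ->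
  ssyt N (map (fun x => x - t) lam) T -> ssyt N lam (fpre t 1 T).
Proof.
move=> Hs Ht HN HT.
have Hmu : sorted geq (map (fun x => x - t) lam).
  by apply: (homo_sorted (f := fun x => x - t) (e := geq)) => // x y; nlia.
have HLB := ssyt_rowsLB Hmu HT.
case: HT => Hsz Hrows Hb Hc; split.
- rewrite fpre_size; move: Hsz Ht {Hrows Hb Hc HLB}.
  elim: T lam {Hs HN Hmu} => [|R T IH] [|l lam] //= [E1 E2] /andP[H1 H2].
  by rewrite (IH lam) // E1; congr (_ :: _); nlia.
- exact: fpre_sorted.
- apply: fpre_bnd => //.
  by have := congr1 size Hsz; rewrite !size_map => ->; nlia.
- exact: fpre_colrel.
Qed.

Lemma std_prefix t a S X : rowsLB a S -> tle S (fpre t a X) ->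
  all (fun R => t <= size R) S -> S = fpre t a (map (drop t) S).
Proof.
elim: S a X => [|R S IH] a [|R0 X] //=.
  by move=> _ [].
move=> [HR HS] [Esz Hle] /andP[HRt Ht].
have HRt' : take t R = nseq t a.
  apply: (@eq_from_nth _ 0); first by rewrite size_takel // size_nseq.
  move=> c; rewrite size_takel // => Hct.
  rewrite nth_take // nth_nseq Hct; apply/eqP; rewrite eqn_leq.
  have := Hle 0 c; rewrite /= nth_cat size_nseq Hct nth_nseq Hct => ->.
  by rewrite (allP HR) // mem_nth //; nlia.
rewrite -{1}(cat_take_drop t R) HRt'; congr (_ :: _).
apply: (IH a.+1 X) => //; split; first by case: Esz.
by move=> r c; exact: (Hle r.+1 c).
Qed.

Lemma drop_colrel t A B : colrel A B -> colrel (drop t A) (drop t B).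
Proof.
move/colrelP => H; apply/colrelP => c; rewrite size_drop !nth_drop => Hc.
by apply: H; nlia.
Qed.

Lemma drop_ssyt N t lam S : all (fun x => t < x) lam -> ssyt N lam S ->
  ssyt N (map (fun x => x - t) lam) (map (drop t) S).
Proof.
move=> Ht [Hsz Hrows Hb Hc]; split.
- by rewrite -Hsz -!map_comp; apply: eq_map => R /=; rewrite size_drop.
- by rewrite all_map; apply/allP => R /(allP Hrows) /= H; apply: drop_sorted.
- rewrite all_map; apply/allP => R /(allP Hb) /allP H /=; apply/allP => z Hz.
  by apply: H; apply: mem_drop Hz.
- by rewrite sorted_map; apply: sub_sorted Hc => A B; apply: drop_colrel.
Qed.


Lemma lift_le N t nu T1 T2 : sorted geq nu -> ssyt N nu T1 ->
  crystal_le N T1 T2 -> crystal_le N (fpre t 1 T1) (fpre t 1 T2).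
Proof.
move=> Hs H1 Hc; have Hp := clos_rt_rt1n _ _ _ _ Hc; clear Hc; elim: Hp H1 => [X|X Y Z [i Hi HF] _ IH] HX.
  exact: rt_refl.
have HY := Ftab_ssyt HX Hi HF.
apply: rt_trans (rt_step _ _ _ _ _) (IH HY).
exists i => //; apply: Fcomm1 HF; exact: ssyt_rowsLB Hs HX.
Qed.

Lemma unlift_le N t lam T1 T2 : sorted geq lam -> all (fun x => t < x) lam ->
  size lam <= N ->
  ssyt N (map (fun x => x - t) lam) T1 -> ssyt N (map (fun x => x - t) lam) T2 ->
  crystal_le N (fpre t 1 T1) (fpre t 1 T2) -> crystal_le N T1 T2.
Proof.
move=> Hs Ht HN H1 H2 Hc; have Hp := clos_rt_rt1n _ _ _ _ Hc; clear Hc.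
have Hmu : sorted geq (map (fun x => x - t) lam).
  by apply: (homo_sorted (f := fun x => x - t) (e := geq)) => // x y; nlia.
suff Hgen : forall X Y, clos_refl_trans_1n tableau (crystal_step N) X Y ->
    forall T, X = fpre t 1 T -> Y = fpre t 1 T2 ->
    ssyt N (map (fun x => x - t) lam) T -> crystal_le N T T2.
  exact: Hgen _ _ Hp T1 erefl erefl H1.
move=> X Y {}Hp; elim: Hp => [X0|X0 X1 Y0 [i Hi HF] Hr IH] T1' Ex Ey H1'.
  by subst; rewrite (fpre_inj Ey); exact: rt_refl.
subst X0 Y0.
clear H1; clear T1; rename T1' into T1; rename H1' into H1.
have HfT1 := fpre_ssyt Hs Ht HN H1.
have HX1 := Ftab_ssyt HfT1 Hi HF.
have Hle : tle X1 (fpre t 1 T2) by apply: crystal_tle; exact: clos_rt1n_rt _ _ _ _ Hr.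
have HX1' : all (fun R => t <= size R) X1.
  case: HX1 => Hsz _ _ _; apply/allP => R HR.
  have : size R \in lam by rewrite -Hsz; apply: map_f.
  by move/(allP Ht); nlia.
have EX1 := std_prefix (ssyt_rowsLB Hs HX1) Hle HX1'.
have HT' := drop_ssyt Ht HX1.
rewrite EX1 in HF.
have HF' := Fcomm2 (ssyt_rowsLB Hmu H1) HF.
apply: rt_trans (rt_step _ _ _ _ _) (IH _ EX1 erefl HT').
by exists i.
Qed.


Lemma last_lb (s : seq nat) : sorted geq s -> all (fun x => last 0 s <= x) s.
Proof.
case: s => //= a s.
elim: s a => [|b s IH] a /=; first by rewrite leqnn.
case/andP=> Hab Hp; have := IH b Hp => /= /andP[Hb ->].
by rewrite andbT (leq_trans Hb Hab).
Qed.

Theorem lemma5p2 (lam : seq nat) (t n : nat) :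
  is_partition lam -> 0 < size lam -> t < last 0 lam -> size lam <= n ->
  let mu := map (fun x => x - t) lam in
  (exists M : tableau, is_SSYT n lam M /\
     exists f : tableau -> tableau,
       [/\ forall T, is_SSYT n mu T -> is_SSYT n lam (f T) /\ crystal_le n (f T) M,
           forall S, is_SSYT n lam S -> crystal_le n S M ->
             exists2 T, is_SSYT n mu T & f T = S &
           forall T1 T2, is_SSYT n mu T1 -> is_SSYT n mu T2 ->
             (crystal_le n T1 T2 <-> crystal_le n (f T1) (f T2))]) /\
  (~ is_lattice (fun T => is_SSYT n mu T) (crystal_le n) ->
   ~ is_lattice (fun T => is_SSYT n lam T) (crystal_le n)).
Proof.
move=> Hpart Hsz Ht Hn mu.
have [Hs Hpos] := andP Hpart.
have Hlt : all (fun x => t < x) lam.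
  by apply/allP => x /(allP (last_lb Hs)) Hx; apply: leq_trans Hx.
have Hmu : sorted geq mu.
  by apply: (homo_sorted (f := fun x => x - t) (e := geq)) => // x y; nlia.
have Hmun : size mu <= n by rewrite size_map.
set M := fpre t 1 (tops n mu).
have HM : ssyt n lam M := fpre_ssyt Hs Hlt Hn (tops_ssyt Hmu Hmun).
have P1 : forall T, is_SSYT n mu T -> is_SSYT n lam (fpre t 1 T) /\ crystal_le n (fpre t 1 T) M.
  move=> T /ssytP HT; split; first by apply/ssytP; apply: fpre_ssyt.
  exact: lift_le Hmu HT (reach_top Hmu Hmun HT).
have P2 : forall S, is_SSYT n lam S -> crystal_le n S M ->
    exists2 T, is_SSYT n mu T & fpre t 1 T = S.
  move=> S /ssytP HS HSM; exists (map (drop t) S); first by apply/ssytP; apply: drop_ssyt.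
  symmetry; apply: std_prefix (ssyt_rowsLB Hs HS) (crystal_tle HSM) _.
  case: HS => HSz _ _ _; apply/allP => R HR.
  have : size R \in lam by rewrite -HSz; apply: map_f.
  by move/(allP Hlt); nlia.
have P3 : forall T1 T2, is_SSYT n mu T1 -> is_SSYT n mu T2 ->
    (crystal_le n T1 T2 <-> crystal_le n (fpre t 1 T1) (fpre t 1 T2)).
  move=> T1 T2 /ssytP H1 /ssytP H2; split.
    exact: lift_le Hmu H1.
  exact: unlift_le Hs Hlt Hn H1 H2.
split.
  exists M; split; first by apply/ssytP.
  by exists (fpre t 1); split.
move=> Hnl Hl; apply: Hnl => x y Hx Hy.
have [[j [Hj Hxj Hyj Hjmin]] [m [Hm Hmx Hmy Hmmax]]] :=
  Hl _ _ (proj1 (P1 x Hx)) (proj1 (P1 y Hy)).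
split.
- have HjM : crystal_le n j M.
    by apply: Hjmin; [apply/ssytP | exact: (proj2 (P1 x Hx)) | exact: (proj2 (P1 y Hy))].
  have [Tj HTj EJ] := P2 j Hj HjM; subst j.
  exists Tj; split => //.
  + by apply/(P3 _ _ Hx HTj).
  + by apply/(P3 _ _ Hy HTj).
  + move=> z Hz Hxz Hyz; apply/(P3 _ _ HTj Hz); apply: Hjmin.
    * exact: (proj1 (P1 z Hz)).
    * by apply/(P3 _ _ Hx Hz).
    * by apply/(P3 _ _ Hy Hz).
- have HmM : crystal_le n m M by apply: rt_trans Hmx (proj2 (P1 x Hx)).
  have [Tm HTm EM] := P2 m Hm HmM; subst m.
  exists Tm; split => //.
  + by apply/(P3 _ _ HTm Hx).
  + by apply/(P3 _ _ HTm Hy).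
  + move=> z Hz Hzx Hzy; apply/(P3 _ _ Hz HTm); apply: Hmmax.
    * exact: (proj1 (P1 z Hz)).
    * by apply/(P3 _ _ Hz Hx).
    * by apply/(P3 _ _ Hz Hy).
Qed.
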